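(* Let $K$ be the $2$-uniform tiling of the plane whose vertex types are $[3^4,6^1]$ and $[3^2,6^2]$. If $X$ is a map on the torus that is a quotient $X=K/\Gamma$ of $K$, then the vertices of $X$ form at most $3$ orbits under ${\rm Aut}(X)$.
   Context: A map is a polyhedral map: a cellular embedding of a connected graph in a closed surface such that the intersection of any two distinct faces is empty, a single vertex, or a single edge. For a vertex $u$, the faces containing $u$ form a cyclic sequence (the face-cycle at $u$); if this cyclic sequence consists of consecutive blocks of $n_1$ $p_1$-gons, then $n_2$ $p_2$-gons, ..., then $n_k$ $p_k$-gons, with cyclically consecutive $p_i$ distinct, then $u$ is said to have type $[p_1^{n_1},\dots,p_k^{n_k}]$ (defined up to cyclic shift and reversal). A $2$-uniform tiling is an edge-to-edge tiling of the Euclidean plane $\mathbb{R}^2$ by regular polygons whose symmetry group has exactly two orbits on the set of vertices; viewed as a map on the plane, its vertices have (at most) two types, listed as $[W;Z]$. (Up to isomorphism there are exactly $20$ such tilings; there is exactly one with the vertex types named in the claim.) For a map $K$ on the plane, a quotient of $K$ on the torus is a map $X$ on the torus together with a polyhedral covering map $\eta:K\to X$ with $X=K/\Gamma$, where $\Gamma\le {\rm Aut}(K)$ is a subgroup acting without fixed vertices, edges or faces and $K/\Gamma$ is homeomorphic to the torus. ${\rm Aut}(X)$ denotes the automorphism group of the map $X$, acting on its vertex set $V(X)$. *)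

(* Defs.v *)
From Stdlib Require Import ZArith List.
Import ListNotations.
Open Scope Z_scope.

(** Points are coordinates (i,j) of the triangular lattice, standing for
    i*e1 + j*e2 with e1 = (1,0), e2 = (1/2, sqrt 3 / 2) (a positively
    oriented basis).  K is obtained from the regular triangular tiling by
    deleting the lattice points of the sublattice
        S = { (i,j) | i = j mod 5 }
    and merging the six unit triangles around each deleted point into a
    regular hexagon.  Each remaining vertex has exactly one deleted
    neighbour (type [3^4,6^1]) or two deleted neighbours at angle 120 degrees
    (type [3^2,6^2]); the point reflection and the lattice translations show
    there are exactly two vertex orbits, so this is the (unique) 2-uniform
    tiling with these vertex types. *)

Definition pt := (Z * Z)%type.

Definition padd (p q : pt) : pt := (fst p + fst q, snd p + snd q).
Definition psub (p q : pt) : pt := (fst p - fst q, snd p - snd q).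

Definition dirs : list pt := [(1,0); (0,1); (-1,1); (-1,0); (0,-1); (1,-1)].

Definition V (p : pt) : Prop := (fst p - snd p) mod 5 <> 0.

Definition edge (x y : pt) : Prop := V x /\ V y /\ In (psub y x) dirs.

(** Faces of K, each given by its boundary vertex list in counterclockwise
    order: up-triangles, down-triangles (all of whose corners are vertices),
    and hexagons around the deleted points of S. *)
Definition face (l : list pt) : Prop :=
  (exists p, l = [p; padd p (1,0); padd p (0,1)] /\ Forall V l) \/
  (exists p, l = [padd p (1,0); padd p (1,1); padd p (0,1)] /\ Forall V l) \/
  (exists s, ~ V s /\ l = map (padd s) dirs).

Definition same_set (l1 l2 : list pt) : Prop := forall z, In z l1 <-> In z l2.

(** Automorphisms of the map K (given as functions on points; only their
    restriction to V matters): bijections of V preserving edges and faces. *)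
Definition IsAutK (g : pt -> pt) : Prop :=
  (forall x, V x -> V (g x)) /\
  (forall x y, V x -> V y -> g x = g y -> x = y) /\
  (forall y, V y -> exists x, V x /\ g x = y) /\
  (forall x y, V x -> V y -> (edge x y <-> edge (g x) (g y))) /\
  (forall l, face l -> exists l', face l' /\ same_set (map g l) l') /\
  (forall l', face l' -> exists l, face l /\ same_set (map g l) l').

Definition IsSubgroupAutK (Gam : (pt -> pt) -> Prop) : Prop :=
  (forall g, Gam g -> IsAutK g) /\
  Gam (fun x => x) /\
  (forall g h, Gam g -> Gam h -> Gam (fun x => g (h x))) /\
  (forall g, Gam g -> exists h, Gam h /\
       forall x, V x -> h (g x) = x /\ g (h x) = x).

Definition id_on_V (g : pt -> pt) : Prop := forall z, V z -> g z = z.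

Definition acts_freely (Gam : (pt -> pt) -> Prop) : Prop :=
  (forall g x, Gam g -> V x -> g x = x -> id_on_V g) /\
  (forall g x y, Gam g -> edge x y ->
      ((g x = x /\ g y = y) \/ (g x = y /\ g y = x)) -> id_on_V g) /\
  (forall g l, Gam g -> face l -> same_set (map g l) l -> id_on_V g).

(** The Gam-orbit relation on vertices (vertices of X = K/Gam). *)
Definition equivG (Gam : (pt -> pt) -> Prop) (x y : pt) : Prop :=
  exists g, Gam g /\ g x = y.

Definition edge_equivG (Gam : (pt -> pt) -> Prop) (e e' : pt * pt) : Prop :=
  exists g, Gam g /\
    ((g (fst e) = fst e' /\ g (snd e) = snd e') \/
     (g (fst e) = snd e' /\ g (snd e) = fst e')).

Definition face_equivG (Gam : (pt -> pt) -> Prop) (l l' : list pt) : Prop :=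
  exists g, Gam g /\ same_set (map g l) l'.

Definition orbit_count {A : Type} (P : A -> Prop) (eqv : A -> A -> Prop)
    (n : nat) : Prop :=
  exists l : list A, length l = n /\ Forall P l /\
    (forall i j a b, nth_error l i = Some a -> nth_error l j = Some b ->
        eqv a b -> i = j) /\
    (forall a, P a -> exists r, In r l /\ eqv r a).

(** Orientation of a triple of points (sign of a determinant in the
    positively oriented lattice basis). *)
Definition ccw (a b c : pt) : Prop :=
  let u := psub b a in let v := psub c a in
  fst u * snd v - snd u * fst v > 0.

(** K/Gam is homeomorphic to the torus: since Gam acts freely, K/Gam is a
    surface; we require it to be compact (finitely many vertex orbits),
    orientable (every element of Gam preserves the orientation of K) and of
    Euler characteristic 0 (#V - #E + #F = 0); by the classification of
    surfaces this is exactly the torus. *)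
Definition quotient_is_torus (Gam : (pt -> pt) -> Prop) : Prop :=
  (exists reps : list pt, forall x, V x -> exists r, In r reps /\ equivG Gam r x) /\
  (forall g a b c, Gam g -> face [a; b; c] -> ccw a b c -> ccw (g a) (g b) (g c)) /\
  (exists nV nE nF,
      orbit_count V (equivG Gam) nV /\
      orbit_count (fun e => edge (fst e) (snd e)) (edge_equivG Gam) nE /\
      orbit_count face (face_equivG Gam) nF /\
      (nV + nF = nE)%nat).

Definition onX (Gam : (pt -> pt) -> Prop) (l : list pt) (z : pt) : Prop :=
  exists x, In x l /\ equivG Gam x z.

(** K/Gam is a polyhedral map: its graph is simple, its faces are polygons
    (no two vertices of a face are identified), and any two distinct faces
    meet in nothing, in a single vertex, or in a single edge. *)
Definition quotient_is_polyhedral (Gam : (pt -> pt) -> Prop) : Prop :=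
  (forall x y, edge x y -> ~ equivG Gam x y) /\
  (forall x y x' y', edge x y -> edge x' y' -> equivG Gam x x' -> equivG Gam y y' ->
      edge_equivG Gam (x, y) (x', y')) /\
  (forall l x y, face l -> In x l -> In y l -> equivG Gam x y -> x = y) /\
  (forall l1 l2, face l1 -> face l2 -> ~ face_equivG Gam l1 l2 ->
     (forall z, ~ (onX Gam l1 z /\ onX Gam l2 z)) \/
     (exists x, V x /\ forall z, (onX Gam l1 z /\ onX Gam l2 z) <-> equivG Gam x z) \/
     (exists x y, edge x y /\ In x l1 /\ In y l1 /\
        (exists g, Gam g /\ In (g x) l2 /\ In (g y) l2) /\
        forall z, (onX Gam l1 z /\ onX Gam l2 z) <->
                  (equivG Gam x z \/ equivG Gam y z))).

Definition edgeX (Gam : (pt -> pt) -> Prop) (x y : pt) : Prop :=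
  exists x' y', equivG Gam x x' /\ equivG Gam y y' /\ edge x' y'.

Definition sameX (Gam : (pt -> pt) -> Prop) (l1 l2 : list pt) : Prop :=
  forall z, onX Gam l1 z <-> onX Gam l2 z.

(** Automorphisms of the map X = K/Gam, represented by functions on points
    compatible with the orbit relation: they induce bijections of V(X)
    preserving the edges and the faces of X. *)
Definition IsAutX (Gam : (pt -> pt) -> Prop) (phi : pt -> pt) : Prop :=
  (forall x, V x -> V (phi x)) /\
  (forall x y, V x -> V y -> equivG Gam x y -> equivG Gam (phi x) (phi y)) /\
  (forall x y, V x -> V y -> equivG Gam (phi x) (phi y) -> equivG Gam x y) /\
  (forall y, V y -> exists x, V x /\ equivG Gam (phi x) y) /\
  (forall x y, V x -> V y -> (edgeX Gam x y <-> edgeX Gam (phi x) (phi y))) /\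
  (forall l, face l -> exists l', face l' /\ sameX Gam (map phi l) l') /\
  (forall l', face l' -> exists l, face l /\ sameX Gam (map phi l) l').

(* Main.v *)
Require Import Defs.
From Stdlib Require Import ZArith List Lia.
Import ListNotations.
Open Scope Z_scope.
Ltac zl := Z.div_mod_to_equations; lia.

Definition dir (i : Z) : pt :=
  match i mod 6 with 0 => (1,0) | 1 => (0,1) | 2 => (-1,1) | 3 => (-1,0) | 4 => (0,-1) | _ => (1,-1) end.

Lemma dir_cases i :
  (i mod 6 = 0 /\ dir i = (1,0)) \/ (i mod 6 = 1 /\ dir i = (0,1)) \/
  (i mod 6 = 2 /\ dir i = (-1,1)) \/ (i mod 6 = 3 /\ dir i = (-1,0)) \/
  (i mod 6 = 4 /\ dir i = (0,-1)) \/ (i mod 6 = 5 /\ dir i = (1,-1)).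
Proof.
  unfold dir.
  assert (H: i mod 6 = 0 \/ i mod 6 = 1 \/ i mod 6 = 2 \/ i mod 6 = 3 \/ i mod 6 = 4 \/ i mod 6 = 5) by zl.
  destruct H as [H|[H|[H|[H|[H|H]]]]]; rewrite H;
  [left | right;left | right;right;left | right;right;right;left | right;right;right;right;left | right;right;right;right;right]; split; reflexivity.
Qed.

Ltac dcase e := let H := fresh "Hm" in let Hd := fresh "Hd" in
  destruct (dir_cases e) as [[H Hd]|[[H Hd]|[[H Hd]|[[H Hd]|[[H Hd]|[H Hd]]]]]];
  try rewrite Hd in *; clear Hd; try (exfalso; zl).

Lemma dir_eqm i j : i mod 6 = j mod 6 -> dir i = dir j.
Proof. intro H; unfold dir; rewrite H; reflexivity. Qed.

Lemma dir_inj i j : dir i = dir j -> i mod 6 = j mod 6.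
Proof. intro H. dcase i; dcase j; try zl; discriminate. Qed.

Lemma dir_In i : In (dir i) dirs.
Proof. dcase i; simpl; tauto. Qed.

Lemma In_dirs d : In d dirs -> exists i, d = dir i.
Proof.
  simpl; intros [H|[H|[H|[H|[H|[H|H]]]]]]; subst;
  [exists 0|exists 1|exists 2|exists 3|exists 4|exists 5|contradiction]; reflexivity.
Qed.

Definition rotz (k : Z) (p : pt) : pt :=
  let (a,b) := p in
  match k mod 6 with 0 => (a,b) | 1 => (-b, a+b) | 2 => (-a-b, a) | 3 => (-a,-b)
  | 4 => (b, -a-b) | _ => (a+b, -a) end.

Lemma rot_cases k a b :
  (k mod 6 = 0 /\ rotz k (a,b) = (a,b)) \/ (k mod 6 = 1 /\ rotz k (a,b) = (-b,a+b)) \/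
  (k mod 6 = 2 /\ rotz k (a,b) = (-a-b,a)) \/ (k mod 6 = 3 /\ rotz k (a,b) = (-a,-b)) \/
  (k mod 6 = 4 /\ rotz k (a,b) = (b,-a-b)) \/ (k mod 6 = 5 /\ rotz k (a,b) = (a+b,-a)).
Proof.
  unfold rotz.
  assert (H: k mod 6 = 0 \/ k mod 6 = 1 \/ k mod 6 = 2 \/ k mod 6 = 3 \/ k mod 6 = 4 \/ k mod 6 = 5) by zl.
  destruct H as [H|[H|[H|[H|[H|H]]]]]; rewrite H;
  [left | right;left | right;right;left | right;right;right;left | right;right;right;right;left | right;right;right;right;right]; split; reflexivity.
Qed.

Ltac rcase k a b := let H := fresh "Hr" in let Hd := fresh "Hd" in
  destruct (rot_cases k a b) as [[H Hd]|[[H Hd]|[[H Hd]|[[H Hd]|[[H Hd]|[H Hd]]]]]];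
  try rewrite Hd in *; clear Hd; try (exfalso; zl).

Lemma kcases k : k mod 6 = 0 \/ k mod 6 = 1 \/ k mod 6 = 2 \/ k mod 6 = 3 \/ k mod 6 = 4 \/ k mod 6 = 5.
Proof. zl. Qed.

Lemma rot_dir k p i : rotz k (padd p (dir i)) = padd (rotz k p) (dir (i + k)).
Proof.
  destruct p as [a b]. unfold padd, rotz; simpl.
  destruct (kcases k) as [H|[H|[H|[H|[H|H]]]]]; rewrite H;
  dcase i; dcase (i+k); simpl; f_equal; lia.
Qed.
Record GoodG (g : pt -> pt) : Prop := {
  gV : forall x, V x -> V (g x);
  ginj : forall x y, V x -> V y -> g x = g y -> x = y;
  gedge : forall x y, edge x y -> edge (g x) (g y);
  gface : forall l, face l -> exists l', face l' /\ same_set (map g l) l';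
  gface' : forall l', face l' -> exists l, face l /\ same_set (map g l) l';
  gor : forall a b c, face [a;b;c] -> ccw a b c -> ccw (g a) (g b) (g c) }.

Ltac pinj := repeat match goal with H : (_,_) = (_,_) |- _ => injection H; clear H; intros end.

Lemma padd_psub x y : y = padd x (psub y x).
Proof. destruct x, y; unfold padd, psub; simpl; f_equal; lia. Qed.

Lemma psub_padd x d : psub (padd x d) x = d.
Proof. destruct x, d; unfold padd, psub; simpl; f_equal; lia. Qed.

Lemma padd_dir_neq w j : w <> padd w (dir j).
Proof. destruct w. dcase j; unfold padd; simpl; intro H; pinj; lia. Qed.

Lemma dir_neq w i j : i mod 6 <> j mod 6 -> padd w (dir i) <> padd w (dir j).
Proof. intros Hij H. apply Hij, dir_inj. destruct w, (dir i), (dir j). unfold padd in H; simpl in H; pinj; f_equal; lia. Qed.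

Lemma face_V l t : face l -> In t l -> V t.
Proof.
  intros [[p [-> HF]]|[[p [-> HF]]|[s [Hs ->]]]] Ht.
  - rewrite Forall_forall in HF; auto.
  - rewrite Forall_forall in HF; auto.
  - destruct s as [s1 s2]; unfold V in *; simpl in *.
    destruct Ht as [<-|[<-|[<-|[<-|[<-|[<-|[]]]]]]]; simpl; zl.
Qed.

Lemma E_lem g (Hg : GoodG g) x i : V x -> V (padd x (dir i)) ->
  exists a, g (padd x (dir i)) = padd (g x) (dir a).
Proof.
  intros Hx Hy.
  assert (He : edge x (padd x (dir i))) by (split; [|split]; auto; rewrite psub_padd; apply dir_In).
  destruct (gedge g Hg _ _ He) as [_ [_ Hin]].
  destruct (In_dirs _ Hin) as [a Ha]. exists a. rewrite <- Ha. apply padd_psub.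
Qed.

Definition cyc3 (A B C P Q R : pt) : Prop :=
  (A = P /\ B = Q /\ C = R) \/ (A = Q /\ B = R /\ C = P) \/ (A = R /\ B = P /\ C = Q).

Lemma FanFace w j : V w -> V (padd w (dir j)) -> V (padd w (dir (j+1))) ->
  exists A B C, face [A;B;C] /\ ccw A B C /\ cyc3 A B C w (padd w (dir j)) (padd w (dir (j+1))).
Proof.
  destruct w as [w1 w2]; intros H0 H1 H2.
  dcase j; dcase (j+1); unfold padd in *; simpl in *.
  - exists (w1,w2), (w1+1,w2+0), (w1+0,w2+1). split; [left; exists (w1,w2); split; [reflexivity|]|split].
    + repeat constructor; unfold V in *; simpl in *; zl.
    + unfold ccw, psub; simpl; lia.
    + left; repeat split; f_equal; lia.
  - exists (w1-1+1,w2+0), (w1-1+1,w2+1), (w1-1+0,w2+1). split; [right;left; exists (w1-1,w2); split; [reflexivity|]|split].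
    + repeat constructor; unfold V in *; simpl in *; zl.
    + unfold ccw, psub; simpl; lia.
    + left; repeat split; f_equal; lia.
  - exists (w1-1,w2), (w1-1+1,w2+0), (w1-1+0,w2+1). split; [left; exists (w1-1,w2); split; [reflexivity|]|split].
    + repeat constructor; unfold V in *; simpl in *; zl.
    + unfold ccw, psub; simpl; lia.
    + right; right; repeat split; f_equal; lia.
  - exists (w1-1+1,w2-1+0), (w1-1+1,w2-1+1), (w1-1+0,w2-1+1). split; [right;left; exists (w1-1,w2-1); split; [reflexivity|]|split].
    + repeat constructor; unfold V in *; simpl in *; zl.
    + unfold ccw, psub; simpl; lia.
    + right; right; repeat split; f_equal; lia.
  - exists (w1,w2-1), (w1+1,w2-1+0), (w1+0,w2-1+1). split; [left; exists (w1,w2-1); split; [reflexivity|]|split].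
    + repeat constructor; unfold V in *; simpl in *; zl.
    + unfold ccw, psub; simpl; lia.
    + right; left; repeat split; f_equal; lia.
  - exists (w1+1,w2-1+0), (w1+1,w2-1+1), (w1+0,w2-1+1). split; [right;left; exists (w1,w2-1); split; [reflexivity|]|split].
    + repeat constructor; unfold V in *; simpl in *; zl.
    + unfold ccw, psub; simpl; lia.
    + right; left; repeat split; f_equal; lia.
Qed.
Lemma In3 {A} (x P Q R : A) : In x [P;Q;R] -> P = x \/ Q = x \/ R = x.
Proof. simpl; tauto. Qed.

Ltac solve_ex := first
  [ exists 0; unfold dir; simpl; split; f_equal; lia
  | exists 1; unfold dir; simpl; split; f_equal; lia
  | exists 2; unfold dir; simpl; split; f_equal; lia
  | exists 3; unfold dir; simpl; split; f_equal; lia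
  | exists 4; unfold dir; simpl; split; f_equal; lia
  | exists 5; unfold dir; simpl; split; f_equal; lia ].

Lemma UnitTri P Q R l : face l -> same_set [P;Q;R] l -> P <> Q -> Q <> R -> P <> R -> ccw P Q R ->
  exists a, Q = padd P (dir a) /\ R = padd P (dir (a+1)).
Proof.
  intros Hf Hs HPQ HQR HPR Hc.
  assert (HP : In P l) by (apply Hs; simpl; tauto).
  assert (HQ : In Q l) by (apply Hs; simpl; tauto).
  assert (HR : In R l) by (apply Hs; simpl; tauto).
  destruct Hf as [[[q1 q2] [-> _]]|[[[q1 q2] [-> _]]|[[s1 s2] [_ ->]]]].
  - simpl in HP, HQ, HR.
    destruct HP as [<-|[<-|[<-|[]]]]; destruct HQ as [<-|[<-|[<-|[]]]]; destruct HR as [<-|[<-|[<-|[]]]];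
    try congruence; unfold padd, ccw, psub in *; simpl in *; try lia; solve_ex.
  - simpl in HP, HQ, HR.
    destruct HP as [<-|[<-|[<-|[]]]]; destruct HQ as [<-|[<-|[<-|[]]]]; destruct HR as [<-|[<-|[<-|[]]]];
    try congruence; unfold padd, ccw, psub in *; simpl in *; try lia; solve_ex.
  - exfalso.
    assert (H0 : In (padd (s1,s2) (1,0)) [P;Q;R]) by (apply Hs; simpl; tauto).
    assert (H1 : In (padd (s1,s2) (0,1)) [P;Q;R]) by (apply Hs; simpl; tauto).
    assert (H2 : In (padd (s1,s2) (-1,1)) [P;Q;R]) by (apply Hs; simpl; tauto).
    assert (H3 : In (padd (s1,s2) (-1,0)) [P;Q;R]) by (apply Hs; simpl; tauto).
    apply In3 in H0, H1, H2, H3. unfold padd in *; simpl in *.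
    destruct H0 as [ -> | [ -> | -> ]]; destruct H1 as [H1|[H1|H1]]; destruct H2 as [H2|[H2|H2]];
    destruct H3 as [H3|[H3|H3]]; subst; pinj; lia.
Qed.

Lemma cyc_rot P Q R a : Q = padd P (dir a) -> R = padd P (dir (a+1)) ->
  R = padd Q (dir (a+2)) /\ P = padd Q (dir (a+2+1)).
Proof.
  intros -> ->. destruct P as [p1 p2].
  dcase a; dcase (a+1); dcase (a+2); dcase (a+2+1); unfold padd; simpl; split; f_equal; lia.
Qed.

Lemma FanT g (Hg : GoodG g) w j : V w -> V (padd w (dir j)) -> V (padd w (dir (j+1))) ->
  exists a, g (padd w (dir j)) = padd (g w) (dir a) /\ g (padd w (dir (j+1))) = padd (g w) (dir (a+1)).
Proof.
  intros H0 H1 H2.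
  destruct (FanFace w j H0 H1 H2) as [A [B [C [Hf [Hc Hcy]]]]].
  pose proof (gor g Hg _ _ _ Hf Hc) as Hc'.
  destruct (gface g Hg _ Hf) as [l' [Hf' Hs]].
  assert (HVA : V A) by (apply (face_V _ _ Hf); simpl; tauto).
  assert (HVB : V B) by (apply (face_V _ _ Hf); simpl; tauto).
  assert (HVC : V C) by (apply (face_V _ _ Hf); simpl; tauto).
  assert (Hd1 : w <> padd w (dir j)) by apply padd_dir_neq.
  assert (Hd2 : w <> padd w (dir (j+1))) by apply padd_dir_neq.
  assert (Hd3 : padd w (dir j) <> padd w (dir (j+1))) by (apply dir_neq; zl).
  assert (HAB : A <> B) by (destruct Hcy as [[-> [-> ->]]|[[-> [-> ->]]|[-> [-> ->]]]]; congruence).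
  assert (HBC : B <> C) by (destruct Hcy as [[-> [-> ->]]|[[-> [-> ->]]|[-> [-> ->]]]]; congruence).
  assert (HAC : A <> C) by (destruct Hcy as [[-> [-> ->]]|[[-> [-> ->]]|[-> [-> ->]]]]; congruence).
  assert (gAB : g A <> g B) by (intro E; apply HAB; apply (ginj g Hg); auto).
  assert (gBC : g B <> g C) by (intro E; apply HBC; apply (ginj g Hg); auto).
  assert (gAC : g A <> g C) by (intro E; apply HAC; apply (ginj g Hg); auto).
  destruct (UnitTri _ _ _ _ Hf' Hs gAB gBC gAC Hc') as [a [Ha1 Ha2]].
  destruct Hcy as [[-> [-> ->]]|[[-> [-> ->]]|[-> [-> ->]]]].
  - exists a; auto.
  - destruct (cyc_rot _ _ _ _ Ha1 Ha2) as [Hb1 Hb2].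
    destruct (cyc_rot _ _ _ _ Hb1 Hb2) as [Hc1 Hc2].
    exists (a+2+2). split; assumption.
  - destruct (cyc_rot _ _ _ _ Ha1 Ha2) as [Hb1 Hb2].
    exists (a+2). split; assumption.
Qed.
Lemma pigeon (x0 x1 x2 x3 P Q R : pt) : In x0 [P;Q;R] -> In x1 [P;Q;R] -> In x2 [P;Q;R] -> In x3 [P;Q;R] ->
  x0 = x1 \/ x0 = x2 \/ x0 = x3 \/ x1 = x2 \/ x1 = x3 \/ x2 = x3.
Proof.
  intros H0 H1 H2 H3; apply In3 in H0, H1, H2, H3.
  destruct H0 as [H0|[H0|H0]]; destruct H1 as [H1|[H1|H1]]; destruct H2 as [H2|[H2|H2]];
  destruct H3 as [H3|[H3|H3]]; subst; auto 7.
Qed.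

Lemma in_img g (Hg : GoodG g) l y : face l -> V y -> In (g y) (map g l) -> In y l.
Proof.
  intros Hf Hy Hin. apply in_map_iff in Hin. destruct Hin as [t [Ht Hin]].
  assert (t = y) as <- by (apply (ginj g Hg); auto; apply (face_V l); auto). auto.
Qed.

Lemma ISO g (Hg : GoodG g) y i A B C : V y -> V (padd y (dir i)) -> ~ V (padd y (dir (i-1))) ->
  ~ V (padd y (dir (i+1))) -> face [A;B;C] -> In (g y) [A;B;C] -> In (g (padd y (dir i))) [A;B;C] -> False.
Proof.
  intros Hy Hz Hn1 Hn2 Hf HA HB.
  destruct (gface' g Hg _ Hf) as [l [Hl Hs]].
  apply Hs in HA, HB. apply (in_img g Hg) in HA, HB; auto.
  destruct Hl as [[[q1 q2] [-> HF]]|[[[q1 q2] [-> HF]]|[[s1 s2] [Hsv ->]]]].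
  - rewrite Forall_forall in HF.
    assert (V1 := HF _ (or_introl eq_refl)). assert (V2 := HF _ (or_intror (or_introl eq_refl))).
    assert (V3 := HF _ (or_intror (or_intror (or_introl eq_refl)))).
    destruct y as [y1 y2]. dcase i; dcase (i-1); dcase (i+1); unfold padd in *; simpl in *;
    destruct HA as [HA|[HA|[HA|[]]]]; destruct HB as [HB|[HB|[HB|[]]]]; pinj; unfold V in *; simpl in *; zl.
  - rewrite Forall_forall in HF.
    assert (V1 := HF _ (or_introl eq_refl)). assert (V2 := HF _ (or_intror (or_introl eq_refl))).
    assert (V3 := HF _ (or_intror (or_intror (or_introl eq_refl)))).
    destruct y as [y1 y2]. dcase i; dcase (i-1); dcase (i+1); unfold padd in *; simpl in *;
    destruct HA as [HA|[HA|[HA|[]]]]; destruct HB as [HB|[HB|[HB|[]]]]; pinj; unfold V in *; simpl in *; zl.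
  - assert (Hr : forall e, In e dirs -> In (g (padd (s1,s2) e)) [A;B;C]).
    { intros e He. apply Hs. apply in_map. apply in_map. auto. }
    assert (HV : forall e, In e dirs -> V (padd (s1,s2) e)).
    { intros e He. apply (face_V (map (padd (s1,s2)) dirs)). right; right; exists (s1,s2); auto. apply in_map; auto. }
    pose proof (pigeon _ _ _ _ _ _ _ (Hr (1,0) ltac:(simpl; tauto)) (Hr (0,1) ltac:(simpl; tauto))
       (Hr (-1,1) ltac:(simpl; tauto)) (Hr (-1,0) ltac:(simpl; tauto))) as Hp.
    destruct Hp as [E|[E|[E|[E|[E|E]]]]]; apply (ginj g Hg) in E; try (apply HV; simpl; tauto);
    unfold padd in E; simpl in E; pinj; lia.
Qed.
Lemma padd_cancel p d d' : padd p d = padd p d' -> d = d'.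
Proof. destruct p, d, d'; unfold padd; simpl; intro H; pinj; f_equal; lia. Qed.

Lemma IsoArith w a b : ~ V (padd w (dir (a-1))) -> ~ V (padd w (dir (a+1))) ->
  V (padd w (dir b)) -> V (padd w (dir (b+1))) -> V (padd w (dir (b+2))) -> a mod 6 = (b+4) mod 6.
Proof.
  intros N1 N2 P0 P1 P2.
  assert (H : (a-1) mod 6 = b mod 6 \/ (a-1) mod 6 = (b+1) mod 6 \/ (a-1) mod 6 = (b+2) mod 6 \/
              (a+1) mod 6 = b mod 6 \/ (a+1) mod 6 = (b+1) mod 6 \/ (a+1) mod 6 = (b+2) mod 6 \/
              a mod 6 = (b+4) mod 6) by zl.
  destruct H as [H|[H|[H|[H|[H|[H|H]]]]]]; auto; exfalso; rewrite (dir_eqm _ _ H) in *; auto.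
Qed.

Lemma IsoN g (Hg : GoodG g) y i a : V y -> V (padd y (dir i)) -> ~ V (padd y (dir (i-1))) ->
  ~ V (padd y (dir (i+1))) -> g (padd y (dir i)) = padd (g y) (dir a) ->
  ~ V (padd (g y) (dir (a+1))) /\ ~ V (padd (g y) (dir (a-1))).
Proof.
  intros Hy Hz N1 N2 Ha.
  assert (Vgy : V (g y)) by (apply (gV g Hg); auto).
  assert (Vgz : V (padd (g y) (dir a))) by (rewrite <- Ha; apply (gV g Hg); auto).
  split; intro HW.
  - destruct (FanFace (g y) a Vgy Vgz HW) as [A [B [C [Hf [_ Hc]]]]].
    apply (ISO g Hg y i A B C); auto;
    destruct Hc as [[-> [-> ->]]|[[-> [-> ->]]|[-> [-> ->]]]]; try rewrite Ha; simpl; tauto.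
  - assert (Vgz' : V (padd (g y) (dir (a-1+1)))) by (rewrite (dir_eqm (a-1+1) a) by zl; auto).
    destruct (FanFace (g y) (a-1) Vgy HW Vgz') as [A [B [C [Hf [_ Hc]]]]].
    rewrite (dir_eqm (a-1+1) a) in Hc by zl.
    apply (ISO g Hg y i A B C); auto;
    destruct Hc as [[-> [-> ->]]|[[-> [-> ->]]|[-> [-> ->]]]]; try rewrite Ha; simpl; tauto.
Qed.

Ltac vd := unfold V, dir, padd; simpl; zl.
Ltac vdH H := unfold V, dir, padd in H; simpl in H; zl.

Ltac fan g Hg y j a Ha Hb :=
  let j' := eval compute in ((j+1) mod 6) in
  destruct (FanT g Hg y j ltac:(vd) ltac:(vd) ltac:(vd)) as [a [Ha Hb]];
  change (dir (j+1)) with (dir j') in Hb.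

Ltac rel g y a b := let H := fresh "Rl" in
  assert (H : a mod 6 = b mod 6) by (apply dir_inj, (padd_cancel (g y)); congruence).

Ltac fin_rot := let i := fresh "i" in let Hi := fresh "Hi" in let Hm := fresh "Hm" in
  intros i Hi; destruct (kcases i) as [Hm|[Hm|[Hm|[Hm|[Hm|Hm]]]]];
  [rewrite (dir_eqm i 0) in * by zl | rewrite (dir_eqm i 1) in * by zl | rewrite (dir_eqm i 2) in * by zl
  |rewrite (dir_eqm i 3) in * by zl | rewrite (dir_eqm i 4) in * by zl | rewrite (dir_eqm i 5) in * by zl];
  first [ exfalso; vdH Hi
        | match goal with H : ?g (padd ?y (dir ?k)) = _ |- ?g (padd ?y (dir ?k)) = _ => rewrite H end;
          f_equal; apply dir_eqm; zl ].

Lemma RotEx g (Hg : GoodG g) y : V y ->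
  exists t, forall i, V (padd y (dir i)) -> g (padd y (dir i)) = padd (g y) (dir (i + t)).
Proof.
  intro Hy. destruct y as [y1 y2].
  assert (Hc : (y1 - y2) mod 5 = 1 \/ (y1 - y2) mod 5 = 2 \/ (y1 - y2) mod 5 = 3 \/ (y1 - y2) mod 5 = 4)
    by (unfold V in Hy; simpl in Hy; zl).
  destruct Hc as [Hc|[Hc|[Hc|Hc]]].
  - (* class 1: deleted 1,3; isolated 2; fan 4,5,0 *)
    fan g Hg (y1,y2) 4 a4 H4a H4b. fan g Hg (y1,y2) 5 a5 H5a H5b.
    rel g (y1,y2) (a4+1) a5.
    destruct (E_lem g Hg (y1,y2) 2 Hy ltac:(vd)) as [a2 H2].
    destruct (IsoN g Hg (y1,y2) 2 a2 Hy ltac:(vd) ltac:(vd) ltac:(vd) H2) as [N1 N2].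
    assert (HI : a2 mod 6 = (a4+4) mod 6).
    { apply (IsoArith (g (y1,y2))); auto.
      - rewrite <- H4a; apply (gV g Hg); vd.
      - rewrite <- H4b; apply (gV g Hg); vd.
      - rewrite (dir_eqm (a4+2) (a5+1)) by zl. rewrite <- H5b; apply (gV g Hg); vd. }
    exists (a4 - 4). fin_rot.
  - (* class 2: deleted 2 *)
    fan g Hg (y1,y2) 3 a3 H3a H3b. fan g Hg (y1,y2) 4 a4 H4a H4b.
    fan g Hg (y1,y2) 5 a5 H5a H5b. fan g Hg (y1,y2) 0 a0 H0a H0b.
    rel g (y1,y2) (a3+1) a4. rel g (y1,y2) (a4+1) a5. rel g (y1,y2) (a5+1) a0.
    exists (a3 - 3). fin_rot.
  - (* class 3: deleted 5 *)
    fan g Hg (y1,y2) 0 a0 H0a H0b. fan g Hg (y1,y2) 1 a1 H1a H1b.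
    fan g Hg (y1,y2) 2 a2 H2a H2b. fan g Hg (y1,y2) 3 a3 H3a H3b.
    rel g (y1,y2) (a0+1) a1. rel g (y1,y2) (a1+1) a2. rel g (y1,y2) (a2+1) a3.
    exists a0. fin_rot.
  - (* class 4: deleted 0,4; isolated 5; fan 1,2,3 *)
    fan g Hg (y1,y2) 1 a1 H1a H1b. fan g Hg (y1,y2) 2 a2 H2a H2b.
    rel g (y1,y2) (a1+1) a2.
    destruct (E_lem g Hg (y1,y2) 5 Hy ltac:(vd)) as [a5 H5].
    destruct (IsoN g Hg (y1,y2) 5 a5 Hy ltac:(vd) ltac:(vd) ltac:(vd) H5) as [N1 N2].
    assert (HI : a5 mod 6 = (a1+4) mod 6).
    { apply (IsoArith (g (y1,y2))); auto.
      - rewrite <- H1a; apply (gV g Hg); vd.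
      - rewrite <- H1b; apply (gV g Hg); vd.
      - rewrite (dir_eqm (a1+2) (a2+1)) by zl. rewrite <- H2b; apply (gV g Hg); vd. }
    exists (a1 - 1). fin_rot.
Qed.
Definition J g k u x := g x = padd (rotz k x) u /\
  forall i, V (padd x (dir i)) -> g (padd x (dir i)) = padd (g x) (dir (i + k)).

Lemma LR g (Hg : GoodG g) y k i0 : V y -> V (padd y (dir i0)) -> g (padd y (dir i0)) = padd (g y) (dir (i0 + k)) ->
  forall i, V (padd y (dir i)) -> g (padd y (dir i)) = padd (g y) (dir (i + k)).
Proof.
  intros Hy H0 E0 i Hi. destruct (RotEx g Hg y Hy) as [t Ht].
  rewrite (Ht i0 H0) in E0. apply padd_cancel, dir_inj in E0.
  rewrite (Ht i Hi). f_equal. apply dir_eqm. zl.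
Qed.

Lemma back x i : padd (padd x (dir i)) (dir (i+3)) = x.
Proof. destruct x. dcase i; dcase (i+3); unfold padd; simpl; f_equal; lia. Qed.

Lemma ring_next s i : padd (padd s (dir i)) (dir (i+2)) = padd s (dir (i+1)).
Proof. destruct s. dcase i; dcase (i+1); dcase (i+2); unfold padd; simpl; f_equal; lia. Qed.

Lemma padd_comm3 a b c : padd (padd a b) c = padd (padd a c) b.
Proof. destruct a, b, c; unfold padd; simpl; f_equal; lia. Qed.

Lemma nbrV s j : ~ V s -> V (padd s (dir j)).
Proof. destruct s. unfold V; simpl. intro H. dcase j; simpl; zl. Qed.

Lemma Jprop g (Hg : GoodG g) k u x i : V x -> J g k u x -> V (padd x (dir i)) -> J g k u (padd x (dir i)).
Proof.
  intros Hx [J1 J2] Hy. assert (E := J2 i Hy).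
  split.
  - rewrite E, J1, rot_dir. apply padd_comm3.
  - apply (LR g Hg _ k (i+3)); auto.
    + rewrite back; auto.
    + rewrite back, E, (dir_eqm (i+3+k) (i+k+3)) by zl. rewrite back; reflexivity.
Qed.

Lemma ring_walk g (Hg : GoodG g) k u s i : ~ V s -> J g k u (padd s (dir i)) -> forall j, J g k u (padd s (dir j)).
Proof.
  intros Hs H0.
  assert (Hn : forall n : nat, J g k u (padd s (dir (i + Z.of_nat n)))).
  { induction n.
    - replace (i + Z.of_nat 0) with i by lia; auto.
    - replace (i + Z.of_nat (S n)) with (i + Z.of_nat n + 1) by lia.
      rewrite <- ring_next. apply Jprop; auto.
      + apply nbrV; auto.
      + rewrite ring_next; apply nbrV; auto. }
  intro j. rewrite (dir_eqm j (i + Z.of_nat (Z.to_nat ((j - i) mod 6)))).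
  - apply Hn.
  - rewrite Z2Nat.id by zl. zl.
Qed.

Definition Gp g k u p := (V p -> J g k u p) /\ (~ V p -> forall i, J g k u (padd p (dir i))).

Lemma V_dec p : V p \/ ~ V p.
Proof. unfold V. destruct (Z.eq_dec ((fst p - snd p) mod 5) 0); auto. Qed.

Lemma Gstep g (Hg : GoodG g) k u p j : Gp g k u p -> Gp g k u (padd p (dir j)).
Proof.
  intros [G1 G2]. destruct (V_dec p) as [Hp|Hp].
  - specialize (G1 Hp). destruct (V_dec (padd p (dir j))) as [Hq|Hq].
    + split; [intros _; apply Jprop; auto | intro; contradiction].
    + split; [intro; contradiction | intros _].
      apply (ring_walk g Hg k u _ (j+3)); auto. rewrite back; auto.
  - assert (Hq : V (padd p (dir j))) by (apply nbrV; auto).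
    split; [intros _; apply G2; auto | intro; contradiction].
Qed.

Lemma Grev g (Hg : GoodG g) k u p j : Gp g k u (padd p (dir j)) -> Gp g k u p.
Proof. intro H. rewrite <- (back p j). apply Gstep; auto. Qed.

Lemma Gall g (Hg : GoodG g) k u p0 : Gp g k u p0 -> forall a b, Gp g k u (padd p0 (a,b)).
Proof.
  intros H0.
  assert (HA : forall a, Gp g k u (padd p0 (a,0))).
  { apply Z.peano_ind.
    - replace (padd p0 (0,0)) with p0 by (destruct p0; unfold padd; simpl; f_equal; lia); auto.
    - intros x HH. replace (padd p0 (Z.succ x, 0)) with (padd (padd p0 (x,0)) (dir 0))
        by (destruct p0; unfold padd, dir; simpl; f_equal; lia).
      exact (Gstep g Hg k u _ 0 HH).
    - intros x HH. apply (Grev g Hg k u _ 0).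
      replace (padd (padd p0 (Z.pred x, 0)) (dir 0)) with (padd p0 (x,0))
        by (destruct p0; unfold padd, dir; simpl; f_equal; lia). exact HH. }
  intro a. apply Z.peano_ind.
  - apply HA.
  - intros x HH. replace (padd p0 (a, Z.succ x)) with (padd (padd p0 (a,x)) (dir 1))
        by (destruct p0; unfold padd, dir; simpl; f_equal; lia).
      exact (Gstep g Hg k u _ 1 HH).
  - intros x HH. apply (Grev g Hg k u _ 1).
      replace (padd (padd p0 (a, Z.pred x)) (dir 1)) with (padd p0 (a,x))
        by (destruct p0; unfold padd, dir; simpl; f_equal; lia). exact HH.
Qed.

Lemma Step1 g (Hg : GoodG g) : exists k u, forall x, V x -> g x = padd (rotz k x) u.
Proof.
  assert (Hb : V (2,0)) by (unfold V; simpl; discriminate).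
  assert (Hb1 : V (padd (2,0) (dir 0))) by (unfold V; simpl; discriminate).
  destruct (E_lem g Hg (2,0) 0 Hb Hb1) as [k Hk].
  exists k, (psub (g (2,0)) (rotz k (2,0))).
  assert (HJ : J g k (psub (g (2,0)) (rotz k (2,0))) (2,0)).
  { split.
    - destruct (g (2,0)), (rotz k (2,0)); unfold padd, psub; simpl; f_equal; lia.
    - apply (LR g Hg _ k 0); auto. }
  assert (HG : Gp g k (psub (g (2,0)) (rotz k (2,0))) (2,0)) by (split; auto; intro; contradiction).
  intros [x1 x2] Hx.
  pose proof (Gall g Hg _ _ _ HG (x1 - 2) (x2 - 0)) as [G1 _].
  replace (padd (2,0) (x1 - 2, x2 - 0)) with (x1,x2) in G1 by (unfold padd; cbn [fst snd]; f_equal; lia).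
  apply G1; auto.
Qed.
Lemma dir0 : dir 0 = (1,0). Proof. reflexivity. Qed.
Lemma dir1 : dir 1 = (0,1). Proof. reflexivity. Qed.
Lemma dir2 : dir 2 = (-1,1). Proof. reflexivity. Qed.
Lemma dir5 : dir 5 = (1,-1). Proof. reflexivity. Qed.

Lemma ring_in c z : In z (map (padd c) dirs) <-> exists j, z = padd c (dir j).
Proof.
  rewrite in_map_iff. split.
  - intros [d [<- Hd]]. destruct (In_dirs d Hd) as [j ->]. eauto.
  - intros [j ->]. exists (dir j). split; auto. apply dir_In.
Qed.

Lemma tri_v1 P i : padd (padd P (dir (i+1))) (dir (i+4)) = P.
Proof. destruct P. dcase i; dcase (i+1); dcase (i+4); unfold padd; simpl; f_equal; lia. Qed.
Lemma tri_v2 P i : padd (padd P (dir (i+1))) (dir (i+5)) = padd P (dir i).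
Proof. destruct P. dcase i; dcase (i+1); dcase (i+5); unfold padd; simpl; f_equal; lia. Qed.
Lemma tri_v3 P j : padd (padd P (dir j)) (dir (j+4)) = padd P (dir (j+5)).
Proof. destruct P. dcase j; dcase (j+4); dcase (j+5); unfold padd; simpl; f_equal; lia. Qed.

Lemma TriPerm g (Hg : GoodG g) (m : pt -> pt) P i :
  (forall x, V x -> g x = m x) ->
  (forall l, face l -> same_set (map g l) l -> id_on_V g) ->
  (m P = padd P (dir i) /\ m (padd P (dir i)) = padd P (dir (i+1)) /\ m (padd P (dir (i+1))) = P) \/
  (m P = padd P (dir (i+1)) /\ m (padd P (dir (i+1))) = padd P (dir i) /\ m (padd P (dir i)) = P) ->
  id_on_V g.
Proof.
  intros HmV Ff Hc.
  assert (A12 : padd P (dir (i+1)) = padd (padd P (dir i)) (dir (i+2))) by (rewrite ring_next; auto).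
  destruct (V_dec P) as [V0|V0].
  - destruct (V_dec (padd P (dir i))) as [V1|V1].
    + destruct (V_dec (padd P (dir (i+1)))) as [V2|V2].
      * destruct (FanFace P i V0 V1 V2) as [A [B [C [Hf [_ Hcy]]]]].
        apply (Ff _ Hf). intro z.
        destruct Hcy as [[-> [-> ->]]|[[-> [-> ->]]|[-> [-> ->]]]]; simpl;
        rewrite (HmV P V0), (HmV _ V1), (HmV _ V2);
        destruct Hc as [[-> [-> ->]]|[-> [-> ->]]]; tauto.
      * exfalso. assert (V0' := V0). assert (V1' := V1).
        apply (gV g Hg) in V0', V1'. rewrite HmV in V0', V1' by auto.
        destruct Hc as [[_ [E _]]|[E _]]; rewrite E in *; auto.
    + exfalso. assert (V2 : V (padd P (dir (i+1)))) by (rewrite A12; apply nbrV; auto).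
      assert (V0' := V0). assert (V2' := V2).
      apply (gV g Hg) in V0', V2'. rewrite HmV in V0', V2' by auto.
      destruct Hc as [[E _]|[_ [E _]]]; rewrite E in *; auto.
  - exfalso. assert (V1 : V (padd P (dir i))) by (apply nbrV; auto).
    assert (V2 : V (padd P (dir (i+1)))) by (apply nbrV; auto).
    assert (V1' := V1). assert (V2' := V2).
    apply (gV g Hg) in V1', V2'. rewrite HmV in V1', V2' by auto.
    destruct Hc as [[_ [_ E]]|[_ [_ E]]]; rewrite E in *; auto.
Qed.
Definition mm k u x := padd (rotz k x) u.

Lemma mm_dir k u x i : mm k u (padd x (dir i)) = padd (mm k u x) (dir (i+k)).
Proof. unfold mm. rewrite rot_dir. apply padd_comm3. Qed.

Lemma FixPt g (Hg : GoodG g) k u c :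
  (forall x, V x -> g x = mm k u x) ->
  (forall x, V x -> g x = x -> id_on_V g) ->
  (forall l, face l -> same_set (map g l) l -> id_on_V g) ->
  mm k u c = c -> id_on_V g.
Proof.
  intros HmV Fv Ff Hc. destruct (V_dec c) as [Vc|Vc].
  - apply (Fv c); auto. rewrite HmV; auto.
  - apply (Ff (map (padd c) dirs)); [right; right; exists c; auto|].
    intro z. rewrite in_map_iff. rewrite ring_in. split.
    + intros [t [<- Ht]]. apply ring_in in Ht. destruct Ht as [j ->].
      rewrite HmV by (apply nbrV; auto). rewrite mm_dir, Hc. eauto.
    + intros [j ->]. exists (padd c (dir (j - k))). split.
      * rewrite HmV by (apply nbrV; auto). rewrite mm_dir, Hc. f_equal. apply dir_eqm. zl.
      * apply ring_in. eauto.
Qed.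

Lemma Swap g (Hg : GoodG g) k u A j :
  (forall x, V x -> g x = mm k u x) -> k mod 6 = 3 ->
  (forall x y, edge x y -> (g x = x /\ g y = y) \/ (g x = y /\ g y = x) -> id_on_V g) ->
  mm k u A = padd A (dir j) -> id_on_V g.
Proof.
  intros HmV Hk Fe HA.
  assert (HB : mm k u (padd A (dir j)) = A).
  { rewrite mm_dir, HA, (dir_eqm (j+k) (j+3)) by zl. apply back. }
  destruct (V_dec A) as [VA|VA].
  - destruct (V_dec (padd A (dir j))) as [VB|VB].
    + apply (Fe A (padd A (dir j))).
      * split; [|split]; auto. rewrite psub_padd. apply dir_In.
      * right. rewrite !HmV by auto. auto.
    + exfalso. apply VB. rewrite <- HA, <- HmV by auto. apply (gV g Hg); auto.
  - exfalso. assert (VB : V (padd A (dir j))) by (apply nbrV; auto).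
    apply VA. rewrite <- HB, <- HmV by auto. apply (gV g Hg); auto.
Qed.

Ltac mmsolve := unfold mm; match goal with |- padd (rotz ?k (?a, ?b)) _ = _ => rcase k a b end;
  rewrite ?dir0, ?dir1, ?dir2, ?dir5; unfold padd; cbn [fst snd]; f_equal; zl.

Lemma Step2 g (Hg : GoodG g) k u :
  (forall x, V x -> g x = mm k u x) ->
  (forall x, V x -> g x = x -> id_on_V g) ->
  (forall x y, edge x y -> (g x = x /\ g y = y) \/ (g x = y /\ g y = x) -> id_on_V g) ->
  (forall l, face l -> same_set (map g l) l -> id_on_V g) ->
  exists u', forall x, V x -> g x = padd x u'.
Proof.
  intros HmV Fv Fe Ff.
  assert (Hid : id_on_V g -> exists u', forall x, V x -> g x = padd x u').
  { intro H. exists (0,0). intros [x1 x2] Hx. rewrite H by auto. unfold padd; cbn [fst snd]; f_equal; lia. }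
  destruct u as [u1 u2].
  destruct (kcases k) as [Hk|[Hk|[Hk|[Hk|[Hk|Hk]]]]].
  - exists (u1,u2). intros [x1 x2] Hx. rewrite HmV by auto. unfold mm. rcase k x1 x2. reflexivity.
  - apply Hid, (FixPt g Hg k (u1,u2) (-u2, u1+u2)); auto. mmsolve.
  -
    apply Hid.
    assert (Ht : (u1 - u2) mod 3 = 0 \/ (u1 - u2) mod 3 = 1 \/ (u1 - u2) mod 3 = 2) by zl.
    destruct Ht as [Ht|[Ht|Ht]].
    + apply (FixPt g Hg k (u1,u2) ((u1-u2)/3, u2 + (u1-u2)/3)); auto. mmsolve.
    + apply (TriPerm g Hg (mm k (u1,u2)) ((u1-u2)/3, (u1-u2)/3 + u2) 0); auto. left.
      rewrite !mm_dir.
      assert (E : mm k (u1,u2) ((u1-u2)/3, (u1-u2)/3 + u2) = padd ((u1-u2)/3, (u1-u2)/3 + u2) (dir 0)) by mmsolve.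
      rewrite E. split; [reflexivity|split].
      * rewrite (dir_eqm (0+k) (0+2)) by zl. apply ring_next.
      * rewrite (dir_eqm (0+1+k) (0+3)) by zl. apply back.
    + apply (TriPerm g Hg (mm k (u1,u2)) ((u1-u2)/3, (u1-u2)/3 + u2 + 1) 5); auto. left.
      rewrite !mm_dir.
      assert (E : mm k (u1,u2) ((u1-u2)/3, (u1-u2)/3 + u2 + 1) = padd ((u1-u2)/3, (u1-u2)/3 + u2 + 1) (dir 5)) by mmsolve.
      rewrite E. split; [reflexivity|split].
      * rewrite (dir_eqm (5+k) (5+2)) by zl. apply ring_next.
      * rewrite (dir_eqm (5+1+k) (5+3)) by zl. apply back.
  -
    apply Hid.
    assert (Ht : (u1 mod 2 = 0 \/ u1 mod 2 = 1) /\ (u2 mod 2 = 0 \/ u2 mod 2 = 1)) by zl.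
    destruct Ht as [[H1|H1] [H2|H2]].
    + apply (FixPt g Hg k (u1,u2) (u1/2, u2/2)); auto. mmsolve.
    + apply (Swap g Hg k (u1,u2) (u1/2, u2/2) 1); auto. mmsolve.
    + apply (Swap g Hg k (u1,u2) (u1/2, u2/2) 0); auto. mmsolve.
    + apply (Swap g Hg k (u1,u2) (u1/2 + 1, u2/2) 2); auto. mmsolve.
  -
    apply Hid.
    assert (Ht : (u1 - u2) mod 3 = 0 \/ (u1 - u2) mod 3 = 1 \/ (u1 - u2) mod 3 = 2) by zl.
    destruct Ht as [Ht|[Ht|Ht]].
    + apply (FixPt g Hg k (u1,u2) (u1 - (u1-u2)/3, - ((u1-u2)/3))); auto. mmsolve.
    + apply (TriPerm g Hg (mm k (u1,u2)) (u1 - (u1-u2)/3 - 1, - ((u1-u2)/3)) 5); auto. right.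
      assert (E : mm k (u1,u2) (u1 - (u1-u2)/3 - 1, - ((u1-u2)/3)) = padd (u1 - (u1-u2)/3 - 1, - ((u1-u2)/3)) (dir 0)) by mmsolve.
      change (dir 0) with (dir (5+1)) in E.
      rewrite !mm_dir, E. split; [reflexivity|split].
      * rewrite (dir_eqm (5+1+k) (5+1+4)) by zl. rewrite tri_v3. f_equal; apply dir_eqm; zl.
      * rewrite (dir_eqm (5+k) (5+1+3)) by zl. apply back.
    + apply (TriPerm g Hg (mm k (u1,u2)) (u1 - (u1-u2)/3 - 1, - ((u1-u2)/3)) 4); auto. right.
      assert (E : mm k (u1,u2) (u1 - (u1-u2)/3 - 1, - ((u1-u2)/3)) = padd (u1 - (u1-u2)/3 - 1, - ((u1-u2)/3)) (dir 5)) by mmsolve.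
      change (dir 5) with (dir (4+1)) in E.
      rewrite !mm_dir, E. split; [reflexivity|split].
      * rewrite (dir_eqm (4+1+k) (4+1+4)) by zl. rewrite tri_v3. f_equal; apply dir_eqm; zl.
      * rewrite (dir_eqm (4+k) (4+1+3)) by zl. apply back.
  - apply Hid, (FixPt g Hg k (u1,u2) (u1+u2, -u1)); auto. mmsolve.
Qed.
Definition pneg (p : pt) : pt := (- fst p, - snd p).
Definition phiF (b : bool) (w : pt) (x : pt) : pt := if b then padd x w else padd (pneg x) w.
Definition Sw (w : pt) : Prop := (fst w - snd w) mod 5 = 0.
Definition cb (b : bool) : Z := if b then 0 else 3.

Lemma phi_dir b w x j : phiF b w (padd x (dir j)) = padd (phiF b w x) (dir (j + cb b)).
Proof.
  destruct x, w. unfold phiF, cb, pneg. destruct b; dcase j; try dcase (j+0); try dcase (j+3);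
  unfold padd; simpl; f_equal; lia.
Qed.

Lemma phi_V b w x : Sw w -> V x -> V (phiF b w x).
Proof. destruct x, w. unfold Sw, V, phiF, pneg. destruct b; unfold padd; simpl; intros; zl. Qed.

Lemma phi_nV b w x : Sw w -> ~ V x -> ~ V (phiF b w x).
Proof. destruct x, w. unfold Sw, V, phiF, pneg. destruct b; unfold padd; simpl; intros; zl. Qed.

Lemma phi_inv b w : Sw w -> exists w', Sw w' /\ forall x, phiF b w' (phiF b w x) = x /\ phiF b w (phiF b w' x) = x.
Proof.
  destruct w as [w1 w2]. unfold Sw; simpl; intro H. destruct b.
  - exists (-w1, -w2). split; [simpl; zl|]. intros [x1 x2]; unfold phiF, padd; simpl; split; f_equal; lia.
  - exists (w1, w2). split; [simpl; zl|]. intros [x1 x2]; unfold phiF, padd, pneg; simpl; split; f_equal; lia.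
Qed.

Lemma phi_edge b w x y : Sw w -> edge x y -> edge (phiF b w x) (phiF b w y).
Proof.
  intros Hw [Hx [Hy Hd]]. split; [apply phi_V; auto|split; [apply phi_V; auto|]].
  destruct (In_dirs _ Hd) as [j Hj].
  rewrite (padd_psub x y), Hj, phi_dir, psub_padd. apply dir_In.
Qed.

Lemma FanSame P i : V P -> V (padd P (dir i)) -> V (padd P (dir (i+1))) ->
  exists l', face l' /\ same_set [P; padd P (dir i); padd P (dir (i+1))] l'.
Proof.
  intros H0 H1 H2. destruct (FanFace P i H0 H1 H2) as [A [B [C [Hf [_ Hc]]]]].
  exists [A;B;C]. split; auto. intro z.
  destruct Hc as [[-> [-> ->]]|[[-> [-> ->]]|[-> [-> ->]]]]; simpl; tauto.
Qed.

Lemma phi_fan b w P i : Sw w -> V P -> V (padd P (dir i)) -> V (padd P (dir (i+1))) ->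
  exists l', face l' /\ same_set (map (phiF b w) [P; padd P (dir i); padd P (dir (i+1))]) l'.
Proof.
  intros Hw H0 H1 H2. simpl map. rewrite !phi_dir.
  apply phi_V with (b := b) (w := w) in H0 as H0'; auto.
  apply phi_V with (b := b) (w := w) in H1 as H1'; auto.
  apply phi_V with (b := b) (w := w) in H2 as H2'; auto.
  rewrite phi_dir in H1', H2'.
  rewrite (dir_eqm (i+1+cb b) (i + cb b + 1)) in * by zl.
  apply FanSame; auto.
Qed.

Lemma phi_face b w l : Sw w -> face l -> exists l', face l' /\ same_set (map (phiF b w) l) l'.
Proof.
  intros Hw Hf. destruct Hf as [[p [-> HF]]|[[p [-> HF]]|[s [Hs ->]]]].
  - rewrite Forall_forall in HF.
    assert (V0 := HF p ltac:(simpl; tauto)). assert (V1 := HF (padd p (1,0)) ltac:(simpl; tauto)).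
    assert (V2 := HF (padd p (0,1)) ltac:(simpl; tauto)).
    change [p; padd p (1,0); padd p (0,1)] with [p; padd p (dir 0); padd p (dir (0+1))].
    apply phi_fan; auto.
  - rewrite Forall_forall in HF.
    assert (V0 := HF (padd p (1,0)) ltac:(simpl; tauto)). assert (V1 := HF (padd p (1,1)) ltac:(simpl; tauto)).
    assert (V2 := HF (padd p (0,1)) ltac:(simpl; tauto)).
    assert (E1 : padd p (1,1) = padd (padd p (1,0)) (dir 1)) by (destruct p; unfold padd, dir; cbn [fst snd]; simpl; f_equal; lia).
    assert (E2 : padd p (0,1) = padd (padd p (1,0)) (dir (1+1))) by (destruct p; unfold padd, dir; cbn [fst snd]; simpl; f_equal; lia).
    rewrite E1, E2 in *. apply phi_fan; auto.
  - exists (map (padd (phiF b w s)) dirs). split; [right; right; exists (phiF b w s); split; auto; apply phi_nV; auto|].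
    intro z. rewrite in_map_iff, ring_in. split.
    + intros [t [<- Ht]]. apply ring_in in Ht. destruct Ht as [j ->]. rewrite phi_dir. eauto.
    + intros [j ->]. exists (padd s (dir (j - cb b))). split.
      * rewrite phi_dir. f_equal. apply dir_eqm. zl.
      * apply ring_in; eauto.
Qed.
Definition GamT (Gam : (pt -> pt) -> Prop) : Prop :=
  (forall g, Gam g -> exists u, forall x, V x -> g x = padd x u) /\
  (forall g, Gam g -> exists h, Gam h /\ forall x, V x -> h (g x) = x /\ g (h x) = x) /\
  Gam (fun x => x) /\ (forall g, Gam g -> forall x, V x -> V (g x)).

Lemma equiv_fwd Gam (HT : GamT Gam) b w x y : Sw w -> V x -> equivG Gam x y ->
  equivG Gam (phiF b w x) (phiF b w y).
Proof.
  intros Hw Hx [g [Hg <-]]. destruct HT as [Ht [Hi [_ HV]]].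
  destruct (Ht g Hg) as [u Hu].
  assert (Hpx : V (phiF b w x)) by (apply phi_V; auto).
  destruct b.
  - exists g. split; auto. rewrite Hu by auto. rewrite Hu by auto.
    destruct x, w, u; unfold phiF, padd; simpl; f_equal; lia.
  - destruct (Hi g Hg) as [h [Hh Hhg]]. destruct (Ht h Hh) as [u' Hu'].
    exists h. split; auto.
    assert (E := proj1 (Hhg x Hx)). rewrite (Hu' (g x)) in E by (apply HV; auto).
    rewrite Hu in E by auto. rewrite Hu' by auto. rewrite Hu by auto.
    destruct x, w, u, u'; unfold phiF, padd, pneg in *; simpl in *; pinj; f_equal; lia.
Qed.

Lemma same_sameX Gam l1 l2 : same_set l1 l2 -> sameX Gam l1 l2.
Proof. intros H z; split; intros [x [Hx Hxz]]; exists x; split; auto; apply H; auto. Qed.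

Lemma IsAutX_phi Gam (HT : GamT Gam) b w : Sw w -> IsAutX Gam (phiF b w).
Proof.
  intro Hw. destruct (phi_inv b w Hw) as [w' [Hw' Hinv]].
  assert (Hid : Gam (fun x => x)) by apply HT.
  assert (HVG : forall g, Gam g -> forall x, V x -> V (g x)) by apply HT.
  assert (HVeq : forall x y, V x -> equivG Gam x y -> V y).
  { intros x y Hx [g [Hg <-]]. apply (HVG g); auto. }
  split; [|split; [|split; [|split; [|split; [|split]]]]].
  - intros; apply phi_V; auto.
  - intros x y Hx Hy; apply equiv_fwd; auto.
  - intros x y Hx Hy H. rewrite <- (proj1 (Hinv x)), <- (proj1 (Hinv y)).
    apply equiv_fwd; auto. apply phi_V; auto.
  - intros y Hy. exists (phiF b w' y). split; [apply phi_V; auto|].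
    rewrite (proj2 (Hinv y)). exists (fun x => x); auto.
  - intros x y Hx Hy. split.
    + intros [x' [y' [Hx' [Hy' He]]]]. exists (phiF b w x'), (phiF b w y').
      split; [apply equiv_fwd; auto|split; [apply equiv_fwd; auto|apply phi_edge; auto]].
    + intros [x' [y' [Hx' [Hy' He]]]]. exists (phiF b w' x'), (phiF b w' y').
      rewrite <- (proj1 (Hinv x)), <- (proj1 (Hinv y)).
      split; [apply equiv_fwd; auto; apply phi_V; auto|split; [apply equiv_fwd; auto; apply phi_V; auto|apply phi_edge; auto]].
  - intros l Hl. destruct (phi_face b w l Hw Hl) as [l' [Hl' Hs]]. exists l'. split; auto. apply same_sameX; auto.
  - intros l' Hl'. destruct (phi_face b w' l' Hw' Hl') as [l [Hl Hs]]. exists l. split; auto.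
    apply same_sameX. intro z. rewrite in_map_iff. split.
    + intros [t [<- Ht]]. apply Hs in Ht. apply in_map_iff in Ht. destruct Ht as [t' [<- Ht']].
      rewrite (proj2 (Hinv t')). auto.
    + intro Hz. exists (phiF b w' z). split; [apply (proj2 (Hinv z))|]. apply Hs. apply in_map; auto.
Qed.

Lemma GoodG_of Gam g : IsSubgroupAutK Gam -> quotient_is_torus Gam -> Gam g -> GoodG g.
Proof.
  intros [HA _] [_ [Hor _]] Hg. destruct (HA g Hg) as [H1 [H2 [_ [H4 [H5 H6]]]]].
  constructor; auto.
  all: try (intros x y He; pose proof He as [Hx [Hy _]]; apply (proj1 (H4 x y Hx Hy)); auto).
  all: try (intros a b c Hf Hc; apply (Hor g); auto).
Qed.

Lemma GamT_of Gam : IsSubgroupAutK Gam -> acts_freely Gam -> quotient_is_torus Gam -> GamT Gam.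
Proof.
  intros HS HF HQ. pose proof HS as [HA [Hid [_ Hinv]]].
  split; [|split; [|split]]; auto.
  - intros g Hg. pose proof (GoodG_of Gam g HS HQ Hg) as Hgd.
    destruct (Step1 g Hgd) as [k [u Hku]].
    destruct HF as [F1 [F2 F3]].
    apply (Step2 g Hgd k u); [exact Hku | intros; eapply F1; eauto | intros; eapply F2; eauto | intros; eapply F3; eauto].
  - intros g Hg x Hx. apply (HA g Hg); auto.
Qed.
Theorem theorem1 (Gam : (pt -> pt) -> Prop) :
  IsSubgroupAutK Gam ->
  acts_freely Gam ->
  quotient_is_torus Gam ->
  quotient_is_polyhedral Gam ->
  exists a b c, V a /\ V b /\ V c /\
    forall v, V v -> exists phi, IsAutX Gam phi /\
      (equivG Gam (phi a) v \/ equivG Gam (phi b) v \/ equivG Gam (phi c) v).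
Proof.
  intros HS HF HQ _.
  pose proof (GamT_of Gam HS HF HQ) as HT.
  assert (Hid : Gam (fun x => x)) by apply HT.
  exists (1,0), (2,0), (1,0).
  split; [unfold V; simpl; discriminate|split; [unfold V; simpl; discriminate|split; [unfold V; simpl; discriminate|]]].
  intros [v1 v2] Hv.
  assert (Hc : (v1 - v2) mod 5 = 1 \/ (v1 - v2) mod 5 = 2 \/ (v1 - v2) mod 5 = 3 \/ (v1 - v2) mod 5 = 4)
    by (unfold V in Hv; simpl in Hv; zl).
  destruct Hc as [Hc|[Hc|[Hc|Hc]]].
  - exists (phiF true (v1 - 1, v2)). split; [apply IsAutX_phi; auto; unfold Sw; simpl; zl|].
    left. exists (fun x => x). split; auto. unfold phiF, padd; cbn [fst snd]; f_equal; lia.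
  - exists (phiF true (v1 - 2, v2)). split; [apply IsAutX_phi; auto; unfold Sw; simpl; zl|].
    right; left. exists (fun x => x). split; auto. unfold phiF, padd; cbn [fst snd]; f_equal; lia.
  - exists (phiF false (v1 + 2, v2)). split; [apply IsAutX_phi; auto; unfold Sw; simpl; zl|].
    right; left. exists (fun x => x). split; auto. unfold phiF, padd, pneg; cbn [fst snd]; f_equal; lia.
  - exists (phiF false (v1 + 1, v2)). split; [apply IsAutX_phi; auto; unfold Sw; simpl; zl|].
    left. exists (fun x => x). split; auto. unfold phiF, padd, pneg; cbn [fst snd]; f_equal; lia.
Qed.
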